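(* Let $(v_0,V,E,\pi)$ be an oriented F-graph that is acyclic and independent, with $\pi:E\to\mathbb{R}_{>0}$. Define $\mathrm{Out}:V\to\mathbb{R}_{\ge0}$ by the recurrence $$\mathrm{Out}(s)=\mathbf{1}_{s=v_0}+\sum_{\substack{e'\in E\\ s\in\mathbf{h}(e')}}\pi(e')\,\mathrm{Out}(t(e'))\prod_{\substack{s'\in\mathbf{h}(e')\\ s'\neq s}}W(s').$$ Then for every arc $e\in E$, $$\sum_{\substack{p\in\mathcal{P}(v_0)\\ e\in p}}\pi(p)=\mathrm{Out}(t(e))\cdot\pi(e)\cdot\prod_{s'\in\mathbf{h}(e)}W(s'),$$ and consequently the probability that a random F-path $p\in\mathcal{P}(v_0)$, drawn with probability $\pi(p)/W(v_0)$, uses the arc $e$ equals $$p_e=\frac{\mathrm{Out}(t(e))\cdot\pi(e)\cdot\prod_{s'\in\mathbf{h}(e)}W(s')}{W(v_0)}.$$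
   Context: An F-graph is a pair $(V,E)$ where $V$ is a finite set of vertices and $E$ is a finite set of F-arcs; an F-arc $e=(t(e)\to\mathbf{h}(e))$ has a single tail vertex $t(e)\in V$ and a head $\mathbf{h}(e)=(t_1,\dots,t_r)$, a finite (possibly empty) ordered list of vertices. The F-paths from $s\in V$ are defined recursively: for any arc $e=(s\to(t_1,\dots,t_r))\in E$ and any F-paths $p_1,\dots,p_r$ from $t_1,\dots,t_r$, the tree $\langle e;p_1,\dots,p_r\rangle$ is an F-path from $s$ (a leaf if $r=0$). $\mathcal{P}(s)$ is the set of F-paths from $s$; ''$e\in p$'' means that $e$ is the arc used at some node of $p$. The F-graph is acyclic if the directed graph on $V$ with an edge $s\to u$ whenever $u$ occurs in the head of an arc with tail $s$ has no directed cycle; it is independent if in every F-path (from any root) each vertex of $V$ labels at most one node. An oriented F-graph $(v_0,V,E,\pi)$ is a weighted independent F-graph with a distinguished initial vertex $v_0\in V$. The weight of an F-path is $\pi(p)=\prod_{\text{nodes }x}\pi(e_x)$, $e_x$ being the arc used at node $x$, and $W(s)=\sum_{p\in\mathcal{P}(s)}\pi(p)$ (empty sum $0$, empty product $1$); $\mathbf{1}_{s=v_0}$ is $1$ if $s=v_0$ and $0$ otherwise. *)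

(* Defs.v *)
From HB Require Import structures.
From mathcomp Require Import all_boot all_order all_algebra.
From Stdlib Require List.
Set Implicit Arguments. Unset Strict Implicit. Unset Printing Implicit Defensive.
Import Order.TTheory GRing.Theory Num.Theory.

(* An F-graph: vertex finType V, arc finType E, each arc e has a tail
   [tl e : V] and an ordered (possibly empty) head [hd e : seq V]. *)

(* F-path trees: a node carries the arc used at that node and the list of
   subtrees, one for each head vertex. *)
Inductive ftree (E : Type) : Type :=
  | FNode : E -> seq (ftree E) -> ftree E.
Arguments FNode {E}.

Definition fp_arc (E : Type) (p : ftree E) : E := let: FNode e _ := p in e.

Section FGraph.
Variables (V E : finType) (tl : E -> V) (hd : E -> seq V).

Definition fp_root (p : ftree E) : V := tl (fp_arc p).

Fixpoint fp_wf (p : ftree E) : bool :=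
  let: FNode e ps := p in
  (map fp_root ps == hd e) &&
  (fix aux (l : seq (ftree E)) : bool :=
     match l with [::] => true | q :: l' => fp_wf q && aux l' end) ps.

Definition is_fpath (s : V) (p : ftree E) : bool := fp_wf p && (fp_root p == s).

Fixpoint fp_arcs (p : ftree E) : seq E :=
  let: FNode e ps := p in
  e :: (fix aux (l : seq (ftree E)) : seq E :=
          match l with [::] => [::] | q :: l' => fp_arcs q ++ aux l' end) ps.

Definition fsucc : rel V := fun s u => [exists e, (tl e == s) && (u \in hd e)].

Definition f_acyclic : Prop := forall s u, fsucc s u -> ~~ connect fsucc u s.

Definition f_independent : Prop :=
  forall s p, is_fpath s p -> uniq (map tl (fp_arcs p)).

Variable R : numDomainType.
Variable pi : E -> R.

Local Open Scope ring_scope.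

Definition fp_weight (p : ftree E) : R := \prod_(a <- fp_arcs p) pi a.

(* [L] enumerates P(s) : a duplicate-free list whose members are exactly the
   F-paths from s (P(s) is finite for acyclic F-graphs). *)
Definition enumerates_paths (L : V -> seq (ftree E)) : Prop :=
  forall s, List.NoDup (L s) /\ (forall p, List.In p (L s) <-> is_fpath s p).

Definition Wsum (L : V -> seq (ftree E)) (s : V) : R :=
  \sum_(p <- L s) fp_weight p.

End FGraph.

(* Main.v *)
Require Import Defs.
From HB Require Import structures.
From mathcomp Require Import all_boot all_order all_algebra ring.
From Stdlib Require List.
Import Order.TTheory GRing.Theory Num.Theory.

Section Tree.
Variable E : eqType.

Fixpoint ft_eqb (p q : ftree E) : bool :=
  let: FNode e ps := p in let: FNode f qs := q in
  (e == f) &&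
  (fix aux (l1 l2 : seq (ftree E)) : bool :=
     match l1, l2 with
     | [::], [::] => true
     | a :: l1', b :: l2' => ft_eqb a b && aux l1' l2'
     | _, _ => false end) ps qs.

Fixpoint ft_ind2 (P : ftree E -> Prop)
  (H : forall e ps, (forall q, List.In q ps -> P q) -> P (FNode e ps)) p : P p :=
  let: FNode e ps := p in
  H e ps ((fix aux (l : seq (ftree E)) : forall q, List.In q l -> P q :=
    match l with
    | [::] => fun q (hq : List.In q [::]) => False_ind _ hq
    | a :: l' => fun q hq => match hq with
                 | or_introl h => eq_ind a P (ft_ind2 P H a) q h
                 | or_intror h => aux l' q h end end) ps).

Lemma ft_eq_sound p q : ft_eqb p q -> p = q.
Proof.
elim/ft_ind2: p q => e ps IH [f qs] /= /andP[/eqP <- h]; congr FNode.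
elim: ps qs IH h => [|a ps IHl] [|b qs] //= IH.
case/andP=> hab hr; congr (_ :: _).
  by apply: (IH a (or_introl erefl)).
by apply: IHl => // q hq; apply: IH; right.
Qed.

Lemma ft_eq_refl p : ft_eqb p p.
Proof.
elim/ft_ind2: p => e ps IH /=; rewrite eqxx /=.
elim: ps IH => [|a ps IHl] //= IH.
apply/andP; split; first by apply: (IH a (or_introl erefl)).
by apply: IHl => q hq; apply: IH; right.
Qed.

Lemma ft_eqP : Equality.axiom ft_eqb.
Proof.
move=> p q; apply: (iffP idP); first exact: ft_eq_sound.
by move=> <-; apply: ft_eq_refl.
Qed.
End Tree.

HB.instance Definition _ (E : eqType) := hasDecEq.Build (ftree E) (@ft_eqP E).

Local Open Scope ring_scope.

Fixpoint combs (T : Type) (ls : seq (seq T)) : seq (seq T) :=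
  if ls is l :: ls' then [seq x :: c | x <- l, c <- @combs T ls'] else [:: [::]].
Arguments combs {T}.

Lemma combs_prod (R : comNzRingType) T (w : T -> R) ls :
  \sum_(c <- combs ls) \prod_(q <- c) w q = \prod_(l <- ls) \sum_(q <- l) w q.
Proof.
elim: ls => [|l ls IH] /=; first by rewrite big_seq1 !big_nil.
rewrite big_allpairs_dep /= big_cons mulr_suml; apply: eq_bigr => x _.
by rewrite -IH mulr_sumr; apply: eq_bigr => c _; rewrite big_cons.
Qed.

Fixpoint dprodV (R : comNzRingType) (V : Type) (G W : V -> R) (l : seq V) : R :=
  if l is h :: t then G h * \prod_(h' <- t) W h' + W h * @dprodV R V G W t else 0.
Arguments dprodV {R V}.

Lemma combs_dsum (R : comNzRingType) (V T : Type) (LL : V -> seq T) (g w : T -> R) hs :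
  \sum_(c <- combs (map LL hs)) (\sum_(q <- c) g q) * \prod_(q <- c) w q =
  dprodV (fun h => \sum_(q <- LL h) g q * w q) (fun h => \sum_(q <- LL h) w q) hs.
Proof.
elim: hs => [|h hs IH] /=; first by rewrite big_seq1 big_nil mul0r.
rewrite big_allpairs_dep /= -IH -(big_map LL xpredT (fun l => \sum_(q <- l) w q)) -combs_prod.
rewrite mulr_suml mulr_suml -big_split /=.
apply: eq_bigr => x _; rewrite !mulr_sumr -big_split /=.
apply: eq_bigr => c _; rewrite !big_cons; ring.
Qed.

Lemma dprod_group (R : comNzRingType) (V : finType) (G W : V -> R) (l : seq V) (c : R) :
  (forall s, (1 < count_mem s l)%N ->
     c * (G s * \prod_(s' <- l | s' != s) W s') = 0) ->
  c * dprodV G W l = c * \sum_(s | s \in l) G s * \prod_(s' <- l | s' != s) W s'.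
Proof.
elim: l c => [|h t IH] c H /=.
  by rewrite big_pred0 // => s; rewrite in_nil.
have Pc s : \prod_(s' <- h :: t | s' != s) W s' =
            (if h != s then W h else 1) * \prod_(s' <- t | s' != s) W s'.
  by rewrite big_cons; case: ifP => _; rewrite ?mul1r.
rewrite mulrDr [c * (W h * _)]mulrA.
case: (boolP (h \in t)) => hin.
  have Hh : c * (G h * \prod_(s' <- t | s' != h) W s') = 0.
    have ct : (0 < count_mem h t)%N by rewrite -has_count has_pred1.
    have := H h; rewrite /= eqxx Pc eqxx mul1r; apply.
    by rewrite add1n ltnS.
  have -> : c * (G h * \prod_(h' <- t) W h') = 0.
    rewrite (bigID (fun s' => s' != h)) /=.
    transitivity (\prod_(i <- t | ~~ (i != h)) W i * (c * (G h * \prod_(s' <- t | s' != h) W s'))); first ring.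
    by rewrite Hh mulr0.
  rewrite add0r IH; last first.
    move=> s cs; have := H s; rewrite /= Pc (leq_trans cs (leq_addl _ _)).
    case: (boolP (h != s)) => [_ Hs|/negPn/eqP <- Hs].
      by rewrite -Hs //; ring.
    by rewrite -(mulr0 (W h)) -Hs //; ring.
  rewrite !mulr_sumr; apply: eq_big => s; first by rewrite in_cons; case: eqP => // ->.
  move=> _; rewrite Pc; case: (boolP (h != s)) => [_|/negPn/eqP <-]; first ring.
  by rewrite mul1r Hh -(mulr0 (W h)) -Hh; ring.
rewrite IH; last first.
  move=> s cs; have hs : h != s by apply: contraNneq hin => ->; rewrite -has_pred1 has_count (ltnW cs).
  have := H s; rewrite /= Pc hs (leq_trans cs (leq_addl _ _)) => Hs.
  by rewrite -Hs; ring.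
rewrite [in RHS](bigD1 h) ?mem_head //= mulrDr Pc eqxx mul1r; congr (_ + _).
  congr (c * (G h * _)); rewrite [RHS]big_seq_cond [LHS]big_seq; apply: eq_bigl => x.
  case: (boolP (x \in t)) => //= xt; symmetry; apply/negP => /eqP xh; move: hin; by rewrite -xh xt.
rewrite !mulr_sumr; apply: eq_big => s.
  rewrite in_cons; case: (boolP (s == h)) => [/eqP->|] /=; by rewrite ?(negbTE hin) ?andbT.
move=> st; have sh : h != s by apply: contraNneq hin => ->.
by rewrite Pc sh; ring.
Qed.

Lemma In_mem (T : eqType) (x : T) s : List.In x s <-> x \in s.
Proof.
elim: s => [|y s IH] //=; rewrite in_cons; split.
  by case=> [->|/IH->]; rewrite ?eqxx ?orbT.
by case/orP => [/eqP->|/IH]; [left|right].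
Qed.

Lemma NoDup_uniq (T : eqType) (s : seq T) : List.NoDup s -> uniq s.
Proof.
elim: s => //= x s IH H; inversion H; subst.
by rewrite IH // andbT; apply/negP => /In_mem.
Qed.

Section Main.
Variables (R : realFieldType) (V E : finType) (tl : E -> V) (hd : E -> seq V)
  (pi : E -> R) (L : V -> seq (ftree E)).
Hypothesis Hind : f_independent tl hd.
Hypothesis Henum : enumerates_paths tl hd L.

Lemma memL s p : (p \in L s) = is_fpath tl hd s p.
Proof. by apply/idP/idP => [/In_mem/(proj2 (Henum s) p)|/(proj2 (Henum s) p)/In_mem]. Qed.

Lemma uniqL s : uniq (L s).
Proof. exact: NoDup_uniq (proj1 (Henum s)). Qed.

Lemma fp_wfE f c : fp_wf tl hd (FNode f c) =
  (map (fp_root tl) c == hd f) && all (fp_wf tl hd) c.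
Proof. by rewrite /=; congr andb; elim: c => //= q c ->. Qed.

Lemma fp_arcsE f c : fp_arcs (FNode f c) = f :: flatten (map (@fp_arcs E) c).
Proof. by rewrite /=; congr cons; elim: c => //= q c ->. Qed.

Lemma fp_weightE f c : fp_weight pi (FNode f c) = pi f * \prod_(q <- c) fp_weight pi q.
Proof. by rewrite /fp_weight fp_arcsE big_cons big_flatten big_map. Qed.

Lemma mem_combs hs c : (c \in combs (map L hs)) =
  (map (fp_root tl) c == hs) && all (fp_wf tl hd) c.
Proof.
elim: hs c => [|h hs IH] [|q c] /=.
- by rewrite inE.
- by rewrite inE.
- by apply/allpairsP => -[[x y] [_ _]].
apply/allpairsP/idP => [[[x y] [/= hx hy [-> ->]]]|].
  by move: hx hy; rewrite memL IH /is_fpath eqseq_cons => /andP[-> ->] /andP[-> ->].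
rewrite eqseq_cons => /andP[/andP[h1 h2] /andP[h3 h4]]; exists (q, c); split => //=.
  by rewrite memL /is_fpath h3 h1.
by rewrite IH h2 h4.
Qed.

Lemma uniq_combs (T : eqType) (ls : seq (seq T)) : all uniq ls -> uniq (combs ls).
Proof.
elim: ls => [|l ls IH] //= /andP[ul uls]; apply: allpairs_uniq => //; first exact: IH.
by move=> [x1 y1] [x2 y2] _ _ /= [-> ->].
Qed.

Lemma decomp (F : ftree E -> R) s : \sum_(p <- L s) F p =
  \sum_(f | tl f == s) \sum_(c <- combs (map L (hd f))) F (FNode f c).
Proof.
transitivity (\sum_(p <- L s) \sum_(f : E) (if f == fp_arc p then F p else 0)).
  by apply: eq_bigr => p _; rewrite -big_mkcond big_pred1_eq.
rewrite exchange_big /= [RHS]big_mkcond; apply: eq_bigr => f _; rewrite -big_mkcond /=.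
case: ifP => hf.
  rewrite -big_filter -(big_map (FNode f) xpredT F); apply: perm_big.
  apply: uniq_perm.
  - by rewrite filter_uniq // uniqL.
  - rewrite map_inj_uniq; last by move=> x y [].
    by apply: uniq_combs; apply/allP => l /mapP[h _ ->]; apply: uniqL.
  move=> [g c]; rewrite mem_filter memL /is_fpath fp_wfE /=.
  case: (eqVneq f g) => [eq|ne] /=; first subst g.
    rewrite mem_map; last by move=> x y [].
    by rewrite mem_combs /fp_root /= hf andbT.
  by apply/esym/mapP => -[y _ [eq _]]; move: ne; rewrite eq eqxx.
apply: big1_seq => p /andP[/eqP fe]; rewrite memL /is_fpath => /andP[_].
by case: p fe => g c /= fe /eqP gs; subst f; move: hf gs; rewrite /fp_root /= => /negbT/eqP.
Qed.

Variable e : E.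
Definition cnt (p : ftree E) : R := (count_mem e (fp_arcs p))%:R.
Definition Gv s := \sum_(p <- L s) cnt p * fp_weight pi p.
Definition Wv s := Wsum pi L s.

Lemma cntE f c : cnt (FNode f c) = (f == e)%:R + \sum_(q <- c) cnt q.
Proof.
rewrite /cnt fp_arcsE /= count_flatten natrD; congr (_ + _).
by rewrite sumnE natr_sum !big_map.
Qed.

Lemma Geq s : Gv s = \sum_(f | tl f == s)
   pi f * ((f == e)%:R * \prod_(h <- hd f) Wv h + dprodV Gv Wv (hd f)).
Proof.
rewrite /Gv decomp; cbv beta; apply: eq_bigr => f _.
transitivity (pi f * ((f == e)%:R * \sum_(c <- combs (map L (hd f))) \prod_(q <- c) fp_weight pi q
   + \sum_(c <- combs (map L (hd f))) (\sum_(q <- c) cnt q) * \prod_(q <- c) fp_weight pi q)).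
  rewrite !mulr_sumr -big_split /= mulr_sumr; apply: eq_bigr => c _; rewrite cntE fp_weightE; ring.
by rewrite combs_prod combs_dsum big_map.
Qed.

Lemma roots_uniq f c : uniq (map tl (fp_arcs (FNode f c))) -> uniq (map (fp_root tl) c).
Proof.
rewrite fp_arcsE /= => /andP[_ u]; apply: subseq_uniq u.
have -> : map (fp_root tl) c = map tl (map (@fp_arc E) c) by rewrite -map_comp.
apply: map_subseq; elim: c => //= -[g ps] c IH.
rewrite fp_arcsE /= eqxx; apply: subseq_trans IH _; exact: suffix_subseq.
Qed.

Lemma cond f s : (1 < count_mem s (hd f))%N ->
  Gv s * \prod_(s' <- hd f | s' != s) Wv s' = 0.
Proof.
move=> cs.
case: (eqVneq (L s) [::]) => [Ls0|Lsn]; first by rewrite /Gv Ls0 big_nil mul0r.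
case: (boolP (has (fun s' => (s' != s) && (L s' == [::])) (hd f))) => [hh|hn].
  apply/eqP; rewrite mulf_eq0 prodf_seq_eq0; apply/orP; right.
  by apply: sub_has hh => x /andP[-> /eqP Lx]; rewrite /Wv /Wsum Lx big_nil eqxx.
exfalso.
pose d := FNode f [::].
pose c := map (fun h => head d (L h)) (hd f).
have hc h : h \in hd f -> head d (L h) \in L h.
  move=> hh; have : L h != [::].
    case: (eqVneq h s) => [->//|ne].
    by move/hasPn: hn => /(_ h hh); rewrite ne.
  by case: (L h) => //= x l _; rewrite mem_head.
have hp : is_fpath tl hd (tl f) (FNode f c).
  rewrite /is_fpath fp_wfE /fp_root /= eqxx andbT; apply/andP; split.
    rewrite -map_comp; apply/eqP; rewrite -[RHS]map_id; apply/eq_in_map => h hh /=.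
    by have := hc h hh; rewrite memL /is_fpath => /andP[_ /eqP].
  apply/allP => q /mapP[h hh ->].
  by have := hc h hh; rewrite memL /is_fpath => /andP[].
have := @roots_uniq f c (Hind _ _ hp).
have -> : map (fp_root tl) c = hd f.
  rewrite -map_comp; rewrite -[RHS]map_id; apply/eq_in_map => h hh /=.
  by have := hc h hh; rewrite memL /is_fpath => /andP[_ /eqP].
move=> u; move: cs; rewrite count_uniq_mem //.
by case: (s \in hd f).
Qed.

Theorem main_eq (v0 : V) (Out : V -> R) :
  (forall s, Out s =
     (s == v0)%:R +
     \sum_(e' : E | s \in hd e')
        pi e' * Out (tl e') *
        \prod_(s' <- hd e' | s' != s) Wsum pi L s') ->
  \sum_(p <- L v0 | e \in fp_arcs p) fp_weight pi p
      = Out (tl e) * pi e * \prod_(s' <- hd e) Wsum pi L s'.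
Proof.
move=> HOut.
have E0 : \sum_(p <- L v0 | e \in fp_arcs p) fp_weight pi p = Gv v0.
  rewrite big_mkcond /Gv big_seq [RHS]big_seq; apply: eq_bigr => p pL.
  have up : uniq (fp_arcs p).
    by have := Hind v0 p; rewrite -memL => /(_ pL) /map_uniq.
  by rewrite /cnt count_uniq_mem //; case: (e \in fp_arcs p); rewrite ?mul1r ?mul0r.
have E1 : Gv v0 = \sum_s (s == v0)%:R * Gv s.
  rewrite (bigD1 v0) //= eqxx mul1r big1 ?addr0 // => s /negbTE ->; by rewrite mul0r.
have E2 : \sum_s Out s * Gv s = Out (tl e) * pi e * \prod_(s' <- hd e) Wv s'
     + \sum_f Out (tl f) * pi f * dprodV Gv Wv (hd f).
  transitivity (\sum_s \sum_(f | tl f == s) Out (tl f) * (pi f * ((f == e)%:R *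
       \prod_(h <- hd f) Wv h + dprodV Gv Wv (hd f)))).
    by apply: eq_bigr => s _; rewrite Geq mulr_sumr; apply: eq_bigr => f /eqP ->.
  rewrite (exchange_big_dep xpredT) //=.
  rewrite (eq_bigr (fun f => Out (tl f) * (pi f * ((f == e)%:R *
       \prod_(h <- hd f) Wv h + dprodV Gv Wv (hd f))))); last first.
    by move=> f _; rewrite (big_pred1 (tl f)) // => s /=; rewrite eq_sym.
  transitivity (\sum_f ((f == e)%:R * (Out (tl f) * pi f * \prod_(h <- hd f) Wv h))
     + \sum_f Out (tl f) * pi f * dprodV Gv Wv (hd f)).
    by rewrite -big_split; apply: eq_bigr => f _ /=; ring.
  congr (_ + _).
  rewrite (bigD1 e) //= eqxx mul1r.
  rewrite [X in _ + X]big1 ?addr0 // => f /negbTE ->; by rewrite mul0r.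
have E3 : \sum_s (s == v0)%:R * Gv s = \sum_s Out s * Gv s -
   \sum_s \sum_(f | s \in hd f) pi f * Out (tl f) * \prod_(s' <- hd f | s' != s) Wv s' * Gv s.
  rewrite -sumrB; apply: eq_bigr => s _.
  by rewrite [Out s]HOut mulrDl mulr_suml addrK.
have E4 : \sum_s \sum_(f | s \in hd f) pi f * Out (tl f) * \prod_(s' <- hd f | s' != s) Wv s' * Gv s
   = \sum_f Out (tl f) * pi f * dprodV Gv Wv (hd f).
  rewrite (exchange_big_dep xpredT) //=; apply: eq_bigr => f _.
  rewrite dprod_group; last by move=> s cs; rewrite cond // mulr0.
  rewrite mulr_sumr; apply: eq_bigr => s _; rewrite /Wv; ring.
by rewrite E0 E1 E3 E4 E2 addrK.
Qed.


End Main.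

Theorem mainTheorem5 (R : realFieldType) (V E : finType)
    (tl : E -> V) (hd : E -> seq V) (pi : E -> R) (v0 : V)
    (L : V -> seq (ftree E)) (Out : V -> R) :
  f_acyclic tl hd ->
  f_independent tl hd ->
  (forall e, 0 < pi e) ->
  enumerates_paths tl hd L ->
  (forall s, Out s =
     (s == v0)%:R +
     \sum_(e' : E | s \in hd e')
        pi e' * Out (tl e') *
        \prod_(s' <- hd e' | s' != s) Wsum pi L s') ->
  forall e : E,
    \sum_(p <- L v0 | e \in fp_arcs p) fp_weight pi p
      = Out (tl e) * pi e * \prod_(s' <- hd e) Wsum pi L s'
  /\ (\sum_(p <- L v0 | e \in fp_arcs p) fp_weight pi p) / Wsum pi L v0
      = Out (tl e) * pi e * \prod_(s' <- hd e) Wsum pi L s' / Wsum pi L v0.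
Proof.
move=> _ Hind _ Henum HOut e.
have H := @main_eq R V E tl hd pi L Hind Henum e v0 Out HOut.
by split; rewrite H.
Qed.
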